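(* Let $[x^{(1)}_k]$ and $[x^{(2)}_k]$ be two zero-mean nonsingular Gaussian Markov sequences over $[0,N]$ that share the same reciprocal model. Then they share the same Markov model if and only if $(R^0_N)^{(1)}=(R^0_N)^{(2)}$, where $(R^0_N)^{(i)}$ is the coefficient $R^0_N$ of the (first-type) reciprocal boundary condition of the $i$-th sequence; equivalently, if and only if $M^{(1)}_N=M^{(2)}_N$.
   Context: $[0,N]=(0,1,\ldots,N)$; $x=[x_0',\ldots,x_N']'$, $C=\mathrm{Cov}(x)$, $'$ denotes transpose; $A_k$ denotes the $(k,k)$ block and $B_k$ the $(k,k+1)$ block of $C^{-1}$. Markov model: a zero-mean nonsingular Gaussian Markov sequence obeys $x_k=M_{k,k-1}x_{k-1}+e^M_k$, $k\in[1,N]$, $x_0=e^M_0$, with $[e^M_k]$ zero-mean white Gaussian, $M_k=\mathrm{Cov}(e^M_k)$; two sequences share the same Markov model if $M_{k,k-1}$ and $M_k$, $k\in[1,N]$, coincide (equivalently their $C^{-1}$ have the same $A_1,\ldots,A_N,B_0,\ldots,B_{N-1}$). Reciprocal model with first-type boundary condition: $R^0_kx_k-R^-_kx_{k-1}-R^+_kx_{k+1}=e^R_k$ for $k\in[1,N-1]$, together with $R^0_0x_0-R^-_0x_N-R^+_0x_1=e^R_0$ and $R^0_Nx_N-R^-_Nx_{N-1}-R^+_Nx_0=e^R_N$, whose coefficients are given by $C^{-1}$: $R^0_k=A_k$ for $k\in[0,N]$, $R^+_k=(R^-_{k+1})'=-B_k$ for $k\in[0,N-1]$, $R^-_0=(R^+_N)'=-D_0$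 where $D_0$ is the $(0,N)$ block. Two sequences share the same reciprocal model if $R^0_k,R^-_k,R^+_k$ for $k\in[1,N-1]$ coincide (equivalently same $A_1,\ldots,A_{N-1},B_0,\ldots,B_{N-1}$). *)

(* Defs.v *)
From HB Require Import structures.
From mathcomp Require Import all_boot all_order all_algebra.
Set Implicit Arguments. Unset Strict Implicit. Unset Printing Implicit Defensive.
Import Order.TTheory GRing.Theory Num.Theory.
Local Open Scope ring_scope.

(* A zero-mean Gaussian sequence x = [x_0', ..., x_N']' with x_k in R^d is
   determined by its covariance C : 'M_((N+1)*d); the (k,l) block of a
   (N+1)d x (N+1)d matrix is extracted through mxvec_index. *)

Section Defs.
Variable R : realFieldType.

(* symmetric positive definite (nonsingular covariance) *)
Definition posdef n (A : 'M[R]_n) : Prop :=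
  A^T = A /\ forall v : 'rV[R]_n, v != 0 -> 0 < (v *m A *m v^T) 0 0.

Variables N d : nat.

Definition blk (A : 'M[R]_(N.+1 * d)) (k l : 'I_N.+1) : 'M[R]_d :=
  \matrix_(i < d, j < d) A (mxvec_index k i) (mxvec_index l j).

Definition Ablk (C : 'M[R]_(N.+1 * d)) (k : nat) : 'M[R]_d :=
  blk (invmx C) (inord k) (inord k).
Definition Bblk (C : 'M[R]_(N.+1 * d)) (k : nat) : 'M[R]_d :=
  blk (invmx C) (inord k) (inord k.+1).

Definition R0 (C : 'M[R]_(N.+1 * d)) (k : nat) : 'M[R]_d := Ablk C k.
Definition Rplus (C : 'M[R]_(N.+1 * d)) (k : nat) : 'M[R]_d := - Bblk C k.
Definition Rminus (C : 'M[R]_(N.+1 * d)) (k : nat) : 'M[R]_d := - (Bblk C k.-1)^T.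

(* Markov model x_k = M_{k,k-1} x_{k-1} + e_k (k in [1,N]), x_0 = e_0, with
   e = G x white with Cov(e_k) = M_k.  Here e_k = sum_j gM Mt k j x_j. *)
Definition gM (Mt : nat -> 'M[R]_d) (k j : 'I_N.+1) : 'M[R]_d :=
  if j == k then 1%:M
  else if (0 < (k : nat))%N && ((j : nat) == (k : nat).-1) then - Mt (k : nat)
  else 0.

(* Cov(e_k, e_l) = sum_i sum_j G_ki C_ij G_lj' = (k == l) M_k *)
Definition markov_model (C : 'M[R]_(N.+1 * d)) (Mt Mc : nat -> 'M[R]_d) : Prop :=
  forall k l : 'I_N.+1,
    \sum_(i < N.+1) \sum_(j < N.+1) (gM Mt k i *m blk C i j *m (gM Mt l j)^T)
    = if k == l then Mc (k : nat) else 0.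

Definition same_markov (Mt1 Mc1 Mt2 Mc2 : nat -> 'M[R]_d) : Prop :=
  forall k : nat, (1 <= k <= N)%N -> Mt1 k = Mt2 k /\ Mc1 k = Mc2 k.

Definition same_reciprocal (C1 C2 : 'M[R]_(N.+1 * d)) : Prop :=
  forall k : nat, (1 <= k <= N.-1)%N ->
    [/\ R0 C1 k = R0 C2 k, Rminus C1 k = Rminus C2 k & Rplus C1 k = Rplus C2 k].

End Defs.

(* Main.v *)
Require Import Defs.
From HB Require Import structures.
From mathcomp Require Import all_boot all_order all_algebra.
From mathcomp Require Import zify.
Import Order.TTheory GRing.Theory Num.Theory.
Local Open Scope ring_scope.

Section Aux.
Variables (R : realFieldType) (N d : nat).
Local Notation n := N.+1.
Local Notation MM := 'M[R]_(N.+1 * d).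

Definition unidx (p : 'I_(n * d)) : 'I_n * 'I_d :=
  enum_val (cast_ord (esym (mxvec_cast n d)) p).

Lemma mxvec_indexK (i : 'I_n) (j : 'I_d) : unidx (mxvec_index i j) = (i, j).
Proof. by rewrite /unidx /mxvec_index cast_ordK enum_rankK. Qed.

Lemma unidxK p : mxvec_index (unidx p).1 (unidx p).2 = p.
Proof. by case/mxvec_indexP: p => i j; rewrite mxvec_indexK. Qed.

Lemma sum_idx (V : nmodType) (f : 'I_(n * d) -> V) :
  \sum_(r < n * d) f r = \sum_(m < n) \sum_(j < d) f (mxvec_index m j).
Proof.
rewrite pair_bigA /=.
rewrite (reindex (fun p : 'I_n * 'I_d => mxvec_index p.1 p.2)) //=.
exists unidx => [[i j] _|p _] /=; first by rewrite mxvec_indexK.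
exact: unidxK.
Qed.

Lemma blk_mul (A B : MM) k l :
  blk (A *m B) k l = \sum_(m < n) blk A k m *m blk B m l.
Proof.
apply/matrixP => i j; rewrite !mxE summxE sum_idx.
by apply: eq_bigr => m _; rewrite !mxE; apply: eq_bigr => r _; rewrite !mxE.
Qed.

Lemma blk_tr (A : MM) k l : blk A^T k l = (blk A l k)^T.
Proof. by apply/matrixP => i j; rewrite !mxE. Qed.

Lemma blk_inj (A B : MM) : (forall k l, blk A k l = blk B k l) -> A = B.
Proof.
move=> H; apply/matrixP => p q.
rewrite -(unidxK p) -(unidxK q).
have := congr1 (fun M : 'M[R]_d => M (unidx p).2 (unidx q).2) (H (unidx p).1 (unidx q).1).
by rewrite !mxE.
Qed.

Definition bmx (F : 'I_n -> 'I_n -> 'M[R]_d) : MM :=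
  \matrix_(p, q) F (unidx p).1 (unidx q).1 (unidx p).2 (unidx q).2.

Lemma blk_bmx F k l : blk (bmx F) k l = F k l.
Proof. by apply/matrixP => i j; rewrite !mxE !mxvec_indexK. Qed.

Lemma blk1 k l : blk (1%:M : MM) k l = if k == l then 1%:M else 0.
Proof.
apply/matrixP => i j; rewrite !mxE.
have -> : (mxvec_index k i == mxvec_index l j) = (k == l) && (i == j).
  apply/eqP/andP => [E|[/eqP -> /eqP ->]] //.
  by have := congr1 unidx E; rewrite !mxvec_indexK => -[-> ->].
by case: (k == l); rewrite ?mxE //= andbF.
Qed.

Lemma bsum1 {V : nmodType} {F : 'I_n -> V} i :
  (forall m, m != i -> F m = 0) -> \sum_m F m = F i.
Proof. by move=> H; rewrite (bigD1 i) //= big1 ?addr0. Qed.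

Lemma bsum2 {V : nmodType} {F : 'I_n -> V} i j : i != j ->
  (forall m, m != i -> m != j -> F m = 0) -> \sum_m F m = F i + F j.
Proof.
move=> ij H; rewrite (bigD1 i) //= (bigD1 j) 1?eq_sym //= big1 ?addr0 //.
by move=> m /andP[? ?]; apply: H.
Qed.


Definition rblk (w : 'rV[R]_(n * d)) (k : 'I_n) : 'rV[R]_d :=
  \row_i w 0 (mxvec_index k i).

Lemma rblk_mul (w : 'rV[R]_(n * d)) (A : MM) l :
  rblk (w *m A) l = \sum_(m < n) rblk w m *m blk A m l.
Proof.
apply/matrixP => i j; rewrite !mxE summxE sum_idx.
by apply: eq_bigr => m _; rewrite !mxE; apply: eq_bigr => r _; rewrite !mxE.
Qed.

Lemma rdot (w u : 'rV[R]_(n * d)) :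
  (w *m u^T) 0 0 = \sum_(m < n) (rblk w m *m (rblk u m)^T) 0 0.
Proof.
rewrite !mxE sum_idx; apply: eq_bigr => m _; rewrite !mxE.
by apply: eq_bigr => r _; rewrite !mxE.
Qed.

Definition emb (k : 'I_n) (v : 'rV[R]_d) : 'rV[R]_(n * d) :=
  \row_p (if (unidx p).1 == k then v 0 (unidx p).2 else 0).

Lemma rblk_emb k v m : rblk (emb k v) m = if m == k then v else 0.
Proof.
apply/matrixP => i j; rewrite !mxE mxvec_indexK /=.
by case: (m == k); rewrite ?mxE // (ord1 i).
Qed.

Lemma ordne {m a : 'I_n} {x : nat} : nat_of_ord a = x -> m != a -> nat_of_ord m != x.
Proof. by move=> <-; apply: contra => /eqP E; apply/eqP/val_inj. Qed.

Lemma trN (A : 'M[R]_d) : (- A)^T = - A^T.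
Proof. by apply/matrixP => i j; rewrite !mxE. Qed.

Lemma gM_diag (Mt : nat -> 'M[R]_d) (k : 'I_n) : gM Mt k k = 1%:M.
Proof. by rewrite /gM eqxx. Qed.

Lemma gM0 (Mt : nat -> 'M[R]_d) (m a : 'I_n) :
  nat_of_ord a != nat_of_ord m -> nat_of_ord m != (nat_of_ord a).+1 -> gM Mt m a = 0.
Proof.
move=> h1 h2; rewrite /gM ifF; last by apply/negbTE.
rewrite ifF //; apply/negbTE; apply/negP => /andP[h3 /eqP h4].
by move/negP: h2; apply; apply/eqP => /=; rewrite h4 prednK.
Qed.

Lemma gMsub (Mt : nat -> 'M[R]_d) (m a : 'I_n) :
  nat_of_ord m = (nat_of_ord a).+1 -> gM Mt m a = - Mt (nat_of_ord m).
Proof.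
move=> h; rewrite /gM ifF; last by apply/negbTE; apply/eqP => E; move: h; rewrite E; lia.
rewrite ifT //; apply/andP; split; rewrite /= h //.
Qed.


Section Seq.
Variables (C : MM) (Mt Mc : nat -> 'M[R]_d).
Hypothesis (HC : posdef C) (HM : markov_model C Mt Mc).

Let Gm : MM := bmx (gM Mt).
Let Dm : MM := bmx (fun k l => if k == l then Mc k else 0).
Let Dinv : MM := bmx (fun k l => if k == l then invmx (Mc k) else 0).

Lemma GCG : Gm *m C *m Gm^T = Dm.
Proof.
apply: blk_inj => k l; rewrite blk_bmx -HM blk_mul.
under eq_bigr => m _ do rewrite blk_tr blk_bmx blk_mul mulmx_suml.
rewrite exchange_big /=; apply: eq_bigr => i _; apply: eq_bigr => j _.
by rewrite blk_bmx.
Qed.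

Lemma Mc_unit (k : 'I_n) : Mc k \in unitmx.
Proof.
rewrite unitmxE unitfE; apply/negP => /det0P [v vn0 vM].
set w := emb k v; set x := w *m Gm.
have xn0 : x != 0.
  apply: contra vn0 => /eqP x0.
  have : rblk x k = v.
    rewrite /x rblk_mul (bsum1 k); first by rewrite rblk_emb eqxx blk_bmx gM_diag mulmx1.
    by move=> m /negbTE mk; rewrite rblk_emb mk mul0mx.
  by rewrite x0 => <-; apply/eqP/matrixP => i j; rewrite !mxE.
have := (proj2 HC) x xn0.
have -> : x *m C *m x^T = w *m (Gm *m C *m Gm^T) *m w^T.
  by rewrite /x trmx_mul !mulmxA.
rewrite GCG rdot.
rewrite (bsum1 k); last by move=> m /negbTE mk; rewrite rblk_emb mk trmx0 mulmx0 mxE.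
rewrite rblk_mul (bsum1 k); last by move=> m /negbTE mk; rewrite rblk_emb mk mul0mx.
by rewrite rblk_emb eqxx blk_bmx eqxx vM mul0mx mxE ltxx.
Qed.

Lemma invC : invmx C = Gm^T *m Dinv *m Gm.
Proof.
have DD : Dinv *m Dm = 1%:M.
  apply: blk_inj => k l; rewrite blk1 blk_mul (bsum1 k).
    rewrite !blk_bmx eqxx; case: (eqVneq k l) => [E|kl]; last by rewrite mulmx0.
    subst l.
    by rewrite mulVmx // Mc_unit.
  by move=> m mk; rewrite blk_bmx eq_sym (negbTE mk) mul0mx.
have YC : Gm^T *m Dinv *m Gm *m C = 1%:M.
  rewrite -!mulmxA; apply: mulmx1C.
  have -> : Dinv *m (Gm *m C) *m Gm^T = Dinv *m (Gm *m C *m Gm^T) by rewrite !mulmxA.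
  by rewrite GCG.
have [_ Cu] := mulmx1_unit YC.
have := congr1 (mulmx^~ (invmx C)) YC; rewrite /= mulmxK // mul1mx.
by move=> ->.
Qed.

Lemma blk_invC a b :
  blk (invmx C) a b = \sum_(m < n) (gM Mt m a)^T *m invmx (Mc m) *m gM Mt m b.
Proof.
rewrite invC blk_mul; apply: eq_bigr => m _; rewrite blk_mul (bsum1 m).
  by rewrite blk_tr !blk_bmx eqxx.
by move=> j jm; rewrite blk_bmx (negbTE jm) mulmx0.
Qed.

Lemma A_form k : (k <= N)%N ->
  Ablk C k = invmx (Mc k) +
    (if (k < N)%N then (Mt k.+1)^T *m invmx (Mc k.+1) *m Mt k.+1 else 0).
Proof.
move=> kN; rewrite /Ablk blk_invC.
have va : nat_of_ord (inord k : 'I_n) = k by rewrite inordK //; lia.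
case: ltnP => kN'.
  have vb : nat_of_ord (inord k.+1 : 'I_n) = k.+1 by rewrite inordK //; lia.
  rewrite (bsum2 (inord k) (inord k.+1)).
  - rewrite gM_diag trmx1 mul1mx mulmx1 va (gMsub _ (inord k.+1) (inord k)) ?vb ?va //.
    by rewrite trN !(mulNmx, mulmxN) opprK.
  - by apply/eqP => /(congr1 val) /=; rewrite va vb; lia.
  move=> m mi mj; rewrite gM0 ?trmx0 ?mul0mx //.
    by rewrite va eq_sym (ordne va mi).
  by rewrite va (ordne vb mj).
rewrite (bsum1 (inord k)).
  by rewrite gM_diag trmx1 mul1mx mulmx1 va addr0.
move=> m mi; rewrite gM0 ?trmx0 ?mul0mx //.
  by rewrite va eq_sym (ordne va mi).
by rewrite va; have := ltn_ord m; apply: contraTneq => ->; lia.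
Qed.

Lemma B_form k : (k < N)%N ->
  Bblk C k = - ((Mt k.+1)^T *m invmx (Mc k.+1)).
Proof.
move=> kN; rewrite /Bblk blk_invC.
have va : nat_of_ord (inord k : 'I_n) = k by rewrite inordK //; lia.
have vb : nat_of_ord (inord k.+1 : 'I_n) = k.+1 by rewrite inordK //; lia.
rewrite (bsum1 (inord k.+1)).
  rewrite gM_diag mulmx1 (gMsub _ (inord k.+1) (inord k)) ?vb ?va //.
  by rewrite trN mulNmx.
move=> m mb; case: (eqVneq m (inord k)) => [->|ma].
  by rewrite (gM0 _ (inord k) (inord k.+1)) ?mulmx0 // ?va ?vb; lia.
by rewrite gM0 ?trmx0 ?mul0mx // va ?(ordne vb mb) // eq_sym (ordne va ma).
Qed.

End Seq.

End Aux.

Lemma McU {R : realFieldType} {N d : nat} {C : 'M[R]_(N.+1 * d)} {Mt Mc} :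
  posdef C -> markov_model C Mt Mc -> forall k, (k <= N)%N -> Mc k \in unitmx.
Proof.
move=> HC HM k kN; have := @Mc_unit R N d C Mt Mc HC HM (inord k).
by rewrite inordK.
Qed.

Theorem proposition6 (R : realFieldType) (N d : nat)
  (C1 C2 : 'M[R]_(N.+1 * d)) (Mt1 Mc1 Mt2 Mc2 : nat -> 'M[R]_d) :
  (1 < N)%N ->
  posdef C1 -> posdef C2 ->
  markov_model C1 Mt1 Mc1 -> markov_model C2 Mt2 Mc2 ->
  same_reciprocal C1 C2 ->
  (same_markov N Mt1 Mc1 Mt2 Mc2 <-> R0 C1 N = R0 C2 N) /\
  (same_markov N Mt1 Mc1 Mt2 Mc2 <-> Mc1 N = Mc2 N).
Proof.
move=> N1 HC1 HC2 HM1 HM2 HR.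
have BB k : (k < N)%N ->
    (Mt1 k.+1)^T *m invmx (Mc1 k.+1) = (Mt2 k.+1)^T *m invmx (Mc2 k.+1).
  move=> kN; apply: oppr_inj.
  rewrite -(@B_form R N d C1 Mt1 Mc1 HC1 HM1 k kN) -(@B_form R N d C2 Mt2 Mc2 HC2 HM2 k kN).
  case: k kN => [|k] kN.
    have [_ E _] := HR 1%N (ltac:(apply/andP; split; lia)).
    move: E; rewrite /Rminus /= => /oppr_inj /(congr1 trmx); rewrite !trmxK => ->.
    by [].
  have [_ _ E] := HR k.+1 (ltac:(apply/andP; split; lia)).
  by move: E; rewrite /Rplus => /oppr_inj ->.
have AA k : (1 <= k)%N -> (k < N)%N ->
    invmx (Mc1 k) + (Mt1 k.+1)^T *m invmx (Mc1 k.+1) *m Mt1 k.+1 =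
    invmx (Mc2 k) + (Mt2 k.+1)^T *m invmx (Mc2 k.+1) *m Mt2 k.+1.
  move=> k1 kN.
  have [E _ _] := HR k (ltac:(apply/andP; split; lia)).
  move: E; rewrite /R0 (@A_form R N d C1 Mt1 Mc1 HC1 HM1 k (ltnW kN)).
  by rewrite (@A_form R N d C2 Mt2 Mc2 HC2 HM2 k (ltnW kN)) kN.
have MtE k : (k < N)%N -> Mc1 k.+1 = Mc2 k.+1 -> Mt1 k.+1 = Mt2 k.+1.
  move=> kN E; have := BB k kN; rewrite E => /(congr1 (mulmx^~ (Mc2 k.+1))) /=.
  have U : invmx (Mc2 k.+1) \in unitmx by rewrite unitmx_inv (McU HC2 HM2 k.+1).
  rewrite -{2 4}[Mc2 k.+1]invmxK !mulmxK // => /(congr1 trmx).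
  by rewrite !trmxK.
have key : same_markov N Mt1 Mc1 Mt2 Mc2 <-> Mc1 N = Mc2 N.
  split => [H|E].
    by have [] := H N (ltac:(apply/andP; split; lia)).
  have claim j : (j < N)%N -> Mc1 (N - j)%N = Mc2 (N - j)%N /\ Mt1 (N - j)%N = Mt2 (N - j)%N.
    elim: j => [|j IH] hj.
      rewrite subn0; split => //.
      have e : N = N.-1.+1 by lia.
      by rewrite e; apply: MtE; rewrite -?e //; lia.
    have [IH1 IH2] := IH (ltac:(lia)).
    have e1 : (N - j = (N - j.+1).+1)%N by lia.
    have McE : Mc1 (N - j.+1)%N = Mc2 (N - j.+1)%N.
      have := AA (N - j.+1)%N (ltac:(lia)) (ltac:(lia)).
      rewrite -!e1 IH1 IH2 => /addIr /(congr1 invmx); rewrite !invmxK //.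
    split => //.
    have e2 : (N - j.+1 = (N - j.+1).-1.+1)%N by lia.
    by rewrite e2; apply: MtE; rewrite -?e2 //; lia.
  move=> k /andP[k1 kN].
  have := claim (N - k)%N (ltac:(lia)).
  have -> : (N - (N - k) = k)%N by lia.
  by case=> -> ->.
split => //; rewrite key /R0.
rewrite (@A_form R N d C1 Mt1 Mc1 HC1 HM1 N (leqnn N)).
rewrite (@A_form R N d C2 Mt2 Mc2 HC2 HM2 N (leqnn N)) ltnn !addr0.
split => [->|h] //.
by have := congr1 invmx h; rewrite !invmxK.
Qed.
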